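(* Let $(p,\mathcal{D})$ be a GNS over an order $\mathcal{O}$, let $\mathcal{F}$ be a fundamental domain associated with $(p,\mathcal{D})$, and let $\Delta=\mathcal{N}\cdot\boldsymbol{\omega}$. Then $(p,\mathcal{D})$ has the finiteness property if and only if for each $a\in R(p,\mathcal{D})$ and each $\alpha\in\Delta$ we have $a+\alpha\in R(p,\mathcal{D})$.
   Context: $\mathbb{K}$ is a number field of degree $k$, $\mathcal{O}$ an order in $\mathbb{K}$ with $\mathbb{Z}$-basis $\omega_1=1,\ldots,\omega_k$, $\boldsymbol{\omega}=(\omega_1,\ldots,\omega_k)$. A GNS over $\mathcal{O}$ is a pair $(p,\mathcal{D})$ with $p\in\mathcal{O}[x]$ monic and $\mathcal{D}\subset\mathcal{O}$ a complete residue system modulo $p(0)$ containing $0$. $R(p,\mathcal{D})$ is the set of $a\in\mathcal{O}[x]$ with $a\equiv\sum_{j=0}^{\ell-1}d_jx^j\pmod p$ for some $\ell\in\mathbb{N}$, $d_j\in\mathcal{D}$; finiteness property means $R(p,\mathcal{D})=\mathcal{O}[x]$. A fundamental domain associated with $(p,\mathcal{D})$ is a bounded set $\mathcal{F}\subset\mathbb{R}^k$ with $\mathbb{R}^k=\mathcal{F}+\mathbb{Z}^k$ disjointly and $\mathcal{D}=\{p(0)\sum_j f_j\omega_j:(f_1,\ldots,f_k)\in\mathcal{F}\}\cap\mathcal{O}$. $\mathcal{N}=\{\mathbf{z}\in\mathbb{Z}^k:\overline{\mathcal{F}}\cap(\overline{\mathcal{F}}+\mathbf{z})\neq\emptyset\}$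 and $\mathcal{N}\cdot\boldsymbol{\omega}=\{\sum_j z_j\omega_j:\mathbf{z}\in\mathcal{N}\}$. *)

(* Defs.v *)
From Stdlib Require Import Reals ZArith.
From HB Require Import structures.
From mathcomp Require Import all_boot all_order all_algebra all_field.
Set Implicit Arguments. Unset Strict Implicit. Unset Printing Implicit Defensive.
Import Order.TTheory GRing.Theory Num.Theory.
Local Open Scope ring_scope.

Definition Z_of_int (z : int) : Z :=
  match z with Posz n => Z.of_nat n | Negz n => Z.opp (Z.of_nat n.+1) end.
Definition Rint (z : int) : R := IZR (Z_of_int z).
Definition Rrat (q : rat) : R := Rdiv (Rint (numq q)) (Rint (denq q)).

Section GNS.
Variables (L : fieldExtType rat) (k : nat) (omega : 'I_k -> L).

Definition omt : k.-tuple L := [tuple omega i | i < k].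

Definition is_basis : Prop := basis_of fullv omt.

Definition inO (x : L) : Prop :=
  exists z : 'I_k -> int, x = \sum_(i < k) ((z i)%:~R : rat) *: omega i.

Definition is_order_basis (hk : (0 < k)%N) : Prop :=
  [/\ is_basis, omega (Ordinal hk) = 1 &
      (forall x y, inO x -> inO y -> inO (x * y))].

Definition polyO (a : {poly L}) : Prop := forall i, inO a`_i.

Definition congO (m a b : L) : Prop := exists c, inO c /\ a - b = m * c.

Definition is_GNS (p : {poly L}) (D : L -> Prop) : Prop :=
  [/\ p \is monic, polyO p,
      (forall d, D d -> inO d) /\ D 0,
      (forall a, inO a -> exists d, D d /\ congO p`_0 a d) &
      (forall d1 d2, D d1 -> D d2 -> congO p`_0 d1 d2 -> d1 = d2)].

Definition inRpD (p : {poly L}) (D : L -> Prop) (a : {poly L}) : Prop :=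
  polyO a /\ exists ds : seq L, (forall d, d \in ds -> D d) /\
    exists q, polyO q /\ a - Poly ds = p * q.

Definition finiteness_property (p : {poly L}) (D : L -> Prop) : Prop :=
  forall a, polyO a -> inRpD p D a.

Definition Rvec := 'I_k -> R.

Definition bounded (F : Rvec -> Prop) : Prop :=
  exists B : R, forall f, F f -> forall i, Rle (Rabs (f i)) B.

Definition tiles (F : Rvec -> Prop) : Prop :=
  (forall x : Rvec, exists f (z : 'I_k -> int),
      F f /\ forall i, x i = Rplus (f i) (Rint (z i))) /\
  (forall f1 f2 (z1 z2 : 'I_k -> int), F f1 -> F f2 ->
      (forall i, Rplus (f1 i) (Rint (z1 i)) = Rplus (f2 i) (Rint (z2 i))) ->
      forall i, z1 i = z2 i).

(* omega-coordinates in K (x) R of p(0) * sum_j f_j omega_j *)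
Definition scaled_coord (p0 : L) (f : Rvec) (i : 'I_k) : R :=
  \big[Rplus/R0]_(j < k) Rmult (Rrat (coord omt i (p0 * omega j))) (f j).

(* D = { p(0) sum_j f_j omega_j : f in F } intersected with O *)
Definition digits_from_F (p : {poly L}) (D : L -> Prop) (F : Rvec -> Prop) : Prop :=
  forall d, D d <-> (inO d /\ exists f, F f /\
       forall i, Rrat (coord omt i d) = scaled_coord p`_0 f i).

Definition is_fundamental_domain (p : {poly L}) (D : L -> Prop) (F : Rvec -> Prop) : Prop :=
  [/\ bounded F, tiles F & digits_from_F p D F].

(* topological closure in R^k (sup-norm, equivalent to the usual one) *)
Definition closure (F : Rvec -> Prop) (x : Rvec) : Prop :=
  forall eps : R, Rlt R0 eps -> exists y, F y /\ forall i, Rlt (Rabs (Rminus (x i) (y i))) eps.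

Definition neighbors (F : Rvec -> Prop) (z : 'I_k -> int) : Prop :=
  exists x : Rvec, closure F x /\ closure F (fun i => Rminus (x i) (Rint (z i))).

Definition inDelta (F : Rvec -> Prop) (alpha : L) : Prop :=
  exists z, neighbors F z /\ alpha = \sum_(j < k) ((z j)%:~R : rat) *: omega j.

End GNS.

(* Main.v *)
Require Import Defs.
From Stdlib Require Import Reals Lra Lia ZArith Classical FunctionalExtensionality.
From HB Require Import structures.
From mathcomp Require Import all_boot all_order all_algebra all_field.
From mathcomp Require Import zify ssrZ.
Set Implicit Arguments. Unset Strict Implicit. Unset Printing Implicit Defensive.
Import Order.TTheory GRing.Theory Num.Theory.
Local Open Scope ring_scope.

Lemma ZofintE (a : int) : Defs.Z_of_int a = ssrZ.Z_of_int a.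
Proof. case: a => n //=; lia. Qed.

Definition zadd k (z w : 'I_k -> int) := fun i => z i + w i.
Definition zsub k (z w : 'I_k -> int) := fun i => z i - w i.
Definition zopp k (z : 'I_k -> int) := fun i => - z i.

Lemma Rint_add (a b : int) : Rint (a + b) = Rplus (Rint a) (Rint b).
Proof. rewrite /Rint !ZofintE -plus_IZR; congr IZR; lia. Qed.
Lemma Rint_sub (a b : int) : Rint (a - b) = Rminus (Rint a) (Rint b).
Proof. rewrite /Rint !ZofintE -minus_IZR; congr IZR; lia. Qed.
Lemma Rint_opp (a : int) : Rint (- a) = Ropp (Rint a).
Proof. rewrite /Rint !ZofintE -opp_IZR; congr IZR; lia. Qed.
Lemma Rint0 : Rint 0 = R0.
Proof. by []. Qed.
Lemma Zofint_inj (a b : int) : Defs.Z_of_int a = Defs.Z_of_int b -> a = b.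
Proof. rewrite !ZofintE; lia. Qed.

Local Close Scope ring_scope.
Local Open Scope R_scope.


Lemma pigeon (A : R -> Z -> Prop) :
  (forall d1 d2 m, 0 < d1 -> d1 <= d2 -> A d1 m -> A d2 m) ->
  forall n lo, (forall d, 0 < d -> exists m, Z.le lo m /\ Z.lt m (Z.add lo (Z.of_nat n)) /\ A d m) ->
  exists m, forall d, 0 < d -> A d m.
Proof.
move=> mono; elim=> [|n IH] lo H.
  have [m [hm [hm2 _]]] := H 1 Rlt_0_1; lia.
case: (classic (forall d, 0 < d -> A d lo)) => [h|h]; first by exists lo.
have [d0 [hd0 nA]] : exists d0, 0 < d0 /\ ~ A d0 lo.
  apply: NNPP => hn; apply: h => d hd; apply: NNPP => hA; apply: hn; by exists d.
apply: (IH (Z.add lo 1)) => d hd.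
have hmin : 0 < Rmin d d0 by apply: Rmin_pos.
have [m [hm [hm2 Am]]] := H _ hmin.
have hne : m <> lo.
  move=> e; subst m; apply: nA; apply: (mono _ _ _ hmin _ Am); exact: Rmin_r.
exists m; split; first lia; split; first lia.
apply: (mono _ _ _ hmin _ Am); exact: Rmin_l.
Qed.

Lemma absle x b : Rabs x <= b -> - b <= x <= b.
Proof. unfold Rabs; destruct (Rcase_abs x); lra. Qed.
Lemma abslt x b : Rabs x < b -> - b < x < b.
Proof. unfold Rabs; destruct (Rcase_abs x); lra. Qed.

Section Topo.
Variables (k : nat) (F : Rvec k -> Prop) (B : R).
Hypothesis HB : forall f, F f -> forall i, Rabs (f i) <= B.
Hypothesis Htile : tiles F.

Definition dec (u : Rvec k) (z : 'I_k -> int) :=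
  exists f, F f /\ forall i, u i = f i + Rint (z i).

Lemma dec_ex u : exists z, dec u z.
Proof. have [f [z [Ff H]]] := (proj1 Htile) u; by exists z, f. Qed.

Lemma dec_uniq u z1 z2 : dec u z1 -> dec u z2 -> forall i, z1 i = z2 i.
Proof.
move=> [f1 [F1 H1]] [f2 [F2 H2]]; apply: (proj2 Htile) F1 F2 _ => i.
by rewrite -H1 -H2.
Qed.

Lemma dec_ext u u' z : (forall i, u i = u' i) -> dec u z -> dec u' z.
Proof. move=> e [f [Ff H]]; exists f; split=> // i; by rewrite -e. Qed.

Lemma closure_ext x y : (forall i, x i = y i) -> Defs.closure F x -> Defs.closure F y.
Proof.
move=> e H eps he; have [z [Fz Hz]] := H eps he; exists z; split=> // i.
by rewrite -e.
Qed.

Lemma nb_ext z w : (forall i, z i = w i) -> neighbors F z -> neighbors F w.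
Proof.
move=> e [x [h1 h2]]; exists x; split=> //; apply: closure_ext h2 => i.
by rewrite e.
Qed.

Lemma nb_opp z : neighbors F z -> neighbors F (zopp z).
Proof.
move=> [x [h1 h2]]; exists (fun i => x i - Rint (z i)); split=> //.
apply: closure_ext h1 => i; rewrite /zopp Rint_opp; ring.
Qed.

Lemma loc u zu : dec u zu -> exists d, 0 < d /\ forall v zv,
  (forall i, Rabs (v i - u i) < d) -> dec v zv -> neighbors F (zsub zv zu).
Proof.
move=> Du; apply: NNPP => Hn.
have Hall : forall d, 0 < d -> exists v zv, (forall i, Rabs (v i - u i) < d) /\
    dec v zv /\ ~ neighbors F (zsub zv zu).
  move=> d hd; apply: NNPP => h; apply: Hn; exists d; split=> // v zv c dv.
  apply: NNPP => hh; apply: h; by exists v, zv.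
have claim : forall j : nat, exists w : 'I_k -> int, forall d, 0 < d ->
   exists v zv, (forall i, Rabs (v i - u i) < d) /\ dec v zv /\
    ~ neighbors F (zsub zv zu) /\ forall i : 'I_k, (i < j)%N -> zv i = w i.
  elim=> [|j [w Hw]].
    exists zu => d hd; have [v [zv [h1 [h2 h3]]]] := Hall d hd.
    by exists v, zv.
  case: (ltnP j k) => hj; last first.
    exists w => d hd; have [v [zv [h1 [h2 [h3 h4]]]]] := Hw d hd.
    exists v, zv; split; first exact: h1; split; first exact: h2; split; first exact: h3; move=> i hi; apply: h4.
    by apply: leq_trans (ltn_ord i) hj.
  pose ij := Ordinal hj.
  pose A d m := exists v zv, (forall i, Rabs (v i - u i) < d) /\ dec v zv /\
    ~ neighbors F (zsub zv zu) /\ (forall i : 'I_k, (i < j)%N -> zv i = w i) /\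
    Defs.Z_of_int (zv ij) = m.
  have mono : forall d1 d2 m, 0 < d1 -> d1 <= d2 -> A d1 m -> A d2 m.
    move=> d1 d2 m h1 h2 [v [zv [c rest]]]; exists v, zv; split=> // i.
    exact: Rlt_le_trans (c i) h2.
  pose c := u ij.
  pose lo := Z.sub (up (c - (B + 1))) 1.
  pose hi := up (c + (B + 1)).
  have [m0 Hm0] : exists m, forall d, 0 < d -> A d m.
    move: (@pigeon A mono (Z.to_nat (Z.sub hi lo)) lo) => P; apply: P => d hd.
    have hmin : 0 < Rmin d 1 by apply: Rmin_pos; lra.
    have [v [zv [h1 [h2 [h3 h4]]]]] := Hw _ hmin.
    exists (Defs.Z_of_int (zv ij)).
    have [f [Ff Hf]] := h2.
    have bf := HB Ff ij.
    have bv := h1 ij.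
    have hv := Hf ij.
    have hm1 : Rmin d 1 <= 1 by apply: Rmin_r.
    have [a1 a2] := archimed (c - (B + 1)).
    have [b1 b2] := archimed (c + (B + 1)).
    have e1 : c - (B + 1) < Rint (zv ij).
      move: bf bv; rewrite /c; move: (Rint (zv ij)) hv => r hv.
      move=> /absle bf /abslt bv; lra.
    have e2 : Rint (zv ij) < c + (B + 1).
      move: bf bv; rewrite /c; move: (Rint (zv ij)) hv => r hv.
      move=> /absle bf /abslt bv; lra.
    rewrite /Rint in e1 e2.
    have z1 : Z.lt lo (Defs.Z_of_int (zv ij)).
      apply: lt_IZR; rewrite /lo minus_IZR; lra.
    have z2 : Z.lt (Defs.Z_of_int (zv ij)) hi.
      apply: lt_IZR; rewrite /hi; lra.
    split; first lia.
    split; first by rewrite Z2Nat.id; lia.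
    exists v, zv; split.
      by move=> i; apply: Rlt_le_trans (h1 i) (Rmin_l _ _).
    split; first exact: h2; split; first exact: h3; split; first exact: h4; by [].
  have [v0 [zv0 [_ [_ [_ [_ e0]]]]]] := Hm0 1 Rlt_0_1.
  exists (fun i => if i == ij then zv0 ij else w i) => d hd.
  have [v [zv [h1 [h2 [h3 [h4 h5]]]]]] := Hm0 d hd.
  exists v, zv; split; first exact: h1; split; first exact: h2; split; first exact: h3; move=> i hi2.
  case: (eqVneq i ij) => [->|ne]; first by rewrite ?eqxx; apply: Zofint_inj; rewrite h5 e0.
  apply: h4; rewrite ltnS leq_eqVlt in hi2; case/orP: hi2 => // /eqP e.
  by move/eqP: ne; case; apply: val_inj.
have [w Hw] := claim k.
have nbw : neighbors F (zsub w zu).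
  have [f [Ff Hf]] := Du.
  exists (fun i => u i - Rint (zu i)); split.
    move=> eps he; exists f; split=> // i; rewrite Hf.
    by replace (f i + Rint (zu i) - Rint (zu i) - f i) with 0 by ring;
      rewrite Rabs_R0.
  move=> eps he; have [v [zv [h1 [h2 [h3 h4]]]]] := Hw eps he.
  have [f' [Ff' Hf']] := h2.
  exists f'; split=> // i.
  rewrite /zsub Rint_sub -h4 ?ltn_ord //.
  replace (u i - Rint (zu i) - (Rint (zv i) - Rint (zu i)) - f' i)
    with (- (v i - u i)) by (rewrite Hf'; ring).
  by rewrite Rabs_Ropp.
have [v [zv [h1 [h2 [h3 h4]]]]] := Hw 1 Rlt_0_1.
apply: h3; apply: nb_ext nbw => i; by rewrite /zsub h4 ?ltn_ord.
Qed.

Variable G : ('I_k -> int) -> Prop.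
Hypothesis Gext : forall z w, (forall i, z i = w i) -> G z -> G w.
Hypothesis Gadd : forall z n, G z -> neighbors F n -> G (zadd z n).

Definition PP u := forall z, dec u z -> G z.

Lemma PP_ext u u' : (forall i, u i = u' i) -> PP u -> PP u'.
Proof.
move=> e H z d; apply: H; apply: dec_ext d => i; by rewrite e.
Qed.

Lemma seg u (j : 'I_k) c : PP u -> PP (fun i => u i + (if i == j then c else 0)).
Proof.
move=> Pu.
pose gam t := fun i => u i + (if i == j then t * c else 0).
pose E t := 0 <= t <= 1 /\ forall s, 0 <= s <= t -> PP (gam s).
have E0 : E 0.
  split; first lra.
  move=> s hs; have -> : s = 0 by lra.
  apply: PP_ext Pu => i; rewrite /gam; case: (i == j); ring.
have bE : bound E by exists 1 => t [ht _]; lra.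
have [T [ubT lubT]] := completeness E bE (ex_intro _ 0 E0).
have T0 : 0 <= T by apply: ubT.
have T1 : T <= 1 by apply: lubT => t [ht _]; lra.
have [zT dT] := dec_ex (gam T).
have [d [hd Hd]] := loc dT.
pose eta := d / (Rabs c + 1).
have hc : 0 < Rabs c + 1 by have := Rabs_pos c; lra.
have heta : 0 < eta by apply: Rdiv_lt_0_compat.
have close : forall s, Rabs (s - T) < eta -> forall i, Rabs (gam s i - gam T i) < d.
  move=> s hs i; rewrite /gam; case: (i == j).
    replace (u i + s * c - (u i + T * c)) with ((s - T) * c) by ring.
    rewrite Rabs_mult.
    have h1 : Rabs (s - T) * (Rabs c + 1) < eta * (Rabs c + 1).
      by apply: Rmult_lt_compat_r.
    have h2 : eta * (Rabs c + 1) = d by rewrite /eta; field; lra.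
    have := Rabs_pos (s - T); nra.
  replace (u i + 0 - (u i + 0)) with 0 by ring; rewrite Rabs_R0; lra.
have [t [Et ht]] : exists t, E t /\ T - eta < t.
  apply: NNPP => hn.
  have : T <= T - eta.
    apply: lubT => t Et; apply: Rnot_lt_le => h; apply: hn; by exists t.
  lra.
have tT : t <= T by apply: ubT.
have [zt dt] := dec_ex (gam t).
have Gzt : G zt by apply: (proj2 Et t) => //; have := proj1 Et; lra.
have GzT : G zT.
  have nb : neighbors F (zsub zt zT).
    apply: Hd dt => i; apply: close; apply: Rabs_def1; lra.
  apply: Gext (Gadd Gzt (nb_opp nb)) => i.
  rewrite /zadd /zopp /zsub; by rewrite opprB addrC subrK.
have Pnear : forall s, Rabs (s - T) < eta -> PP (gam s).
  move=> s hs z dz.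
  have nb : neighbors F (zsub z zT) by apply: Hd dz => i; apply: close.
  apply: Gext (Gadd GzT nb) => i; rewrite /zadd /zsub; by rewrite addrC subrK.
pose s0 := Rmin 1 (T + eta / 2).
have Es0 : E s0.
  have a1 : s0 <= 1 by apply: Rmin_l.
  have a2 : s0 <= T + eta / 2 by apply: Rmin_r.
  have a3 : 0 <= s0.
    rewrite /s0 /Rmin; case: Rle_dec => _; lra.
  split; first lra.
  move=> s hs; case: (Rle_dec s t) => hst.
    apply: (proj2 Et) ; lra.
  apply: Pnear; apply: Rabs_def1; lra.
have s0T : s0 <= T by apply: ubT.
have s01 : s0 = 1.
  move: s0T; rewrite /s0 /Rmin; case: Rle_dec => //; lra.
rewrite s01 in Es0.
apply: PP_ext (proj2 Es0 1 _); last lra.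
move=> i; rewrite /gam; case: (i == j); ring.
Qed.

Hypothesis G0 : G (fun _ => 0%R).

Lemma topo : forall z, G z.
Proof.
have [f [z0 [Ff _]]] := (proj1 Htile) (fun _ => 0).
have Pf : PP f.
  move=> z dz.
  have d0 : dec f (fun _ => 0%R) by exists f; split => // i'; rewrite Rint0; ring.
  apply: Gext G0 => i; exact: (dec_uniq d0 dz i).
move=> z.
have H : forall j : nat, PP (fun i => f i + (if (i < j)%N then Rint (z i) else 0)).
  elim=> [|j IH].
    by apply: PP_ext Pf => i; rewrite /=; ring.
  case: (ltnP j k) => hj; last first.
    apply: PP_ext IH => i.
    have h1 : (i < j)%N by apply: leq_trans (ltn_ord i) hj.
    by rewrite h1 (leq_trans h1 (leqnSn j)).
  pose ij := Ordinal hj.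
  apply: (PP_ext _ (seg (j:=ij) (c:=Rint (z ij)) IH)) => i.
  case: (eqVneq i ij) => [->|ne] /=.
    by rewrite ltnn ltnSn; ring.
  have hne : (i : nat) <> j by move=> e; move/eqP: ne; apply; apply: val_inj.
  rewrite [(i < j.+1)%N]ltnS [(i <= j)%N]leq_eqVlt; case: eqP => // _ /=; ring.
apply: (H k); exists f; split=> // i; by rewrite ltn_ord.
Qed.

End Topo.

Local Close Scope R_scope.
Local Open Scope ring_scope.

Section Alg.
Variables (L : fieldExtType rat) (k : nat) (omega : 'I_k -> L).

Definition sumz (z : 'I_k -> int) := \sum_(j < k) ((z j)%:~R : rat) *: omega j.

Lemma sumz_ext z w : (forall i, z i = w i) -> sumz z = sumz w.
Proof. move=> e; apply: eq_bigr => i _; by rewrite e. Qed.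

Lemma sumz_add z w : sumz (zadd z w) = sumz z + sumz w.
Proof. rewrite /sumz -big_split; apply: eq_bigr => i _; by rewrite /zadd intrD scalerDl. Qed.

Lemma sumz0 : sumz (fun _ => 0) = 0.
Proof. rewrite /sumz big1 // => i _; by rewrite scale0r. Qed.

Lemma inO0 : inO omega 0.
Proof. exists (fun _ => 0); symmetry; exact: sumz0. Qed.

Lemma inOD x y : inO omega x -> inO omega y -> inO omega (x + y).
Proof.
move=> [z ->] [w ->]; exists (zadd z w); by rewrite -sumz_add.
Qed.

Lemma polyOMX q : polyO omega q -> polyO omega (q * 'X).
Proof. move=> h i; rewrite coefMX; case: (i == 0%N) => //; exact: inO0. Qed.

End Alg.

Unset Implicit Arguments.
Theorem mainTheorem7 (L : fieldExtType rat) (k : nat) (hk : (0 < k)%N)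
  (omega : 'I_k -> L) (p : {poly L}) (D : L -> Prop) (F : Rvec k -> Prop) :
  is_order_basis omega hk ->
  is_GNS omega p D ->
  is_fundamental_domain omega p D F ->
  (finiteness_property omega p D <->
   forall (a : {poly L}) (alpha : L),
     inRpD omega p D a -> inDelta omega F alpha ->
     inRpD omega p D (a + alpha%:P)).
Proof.
move=> _ [Hmon HpO [HDO HD0] Hrep Huniq] [[B HB] Htile Hdig].
split.
  move=> Hfin a al [HaO _] [z [_ ->]]; apply: Hfin => i.
  rewrite coefD coefC; apply: inOD => //.
  case: (i == 0%N); last exact: inO0.
  by exists z.
move=> H.
pose G z := forall a, inRpD omega p D a -> inRpD omega p D (a + (sumz omega z)%:P).
have Gall : forall z, G z.
  apply: (@topo k F B HB Htile G).
  - move=> z w e Gz a Ra; rewrite -(sumz_ext omega e); exact: Gz.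
  - move=> z n Gz nb a Ra; rewrite sumz_add polyCD addrA; apply: H; first exact: Gz.
    by exists n.
  - move=> a Ra; by rewrite sumz0 addr0.
have Hmul : forall a, inRpD omega p D a -> inRpD omega p D (a * 'X).
  move=> a [HaO [ds [Hds [q [Hq e]]]]]; split; first exact: polyOMX.
  exists (0 :: ds); split.
    move=> d; rewrite in_cons; case/orP => [/eqP ->|]; [exact: HD0|exact: Hds].
  exists (q * 'X); split; first exact: polyOMX.
  by rewrite /= cons_poly_def polyC0 addr0 -mulrBl e mulrA.
move=> a; elim/poly_ind: a => [|a c IH] hO.
  split=> //; exists [::]; split=> //; exists 0; split.
    move=> i; rewrite coef0; exact: inO0.
  by rewrite /= subrr mulr0.
have haO : polyO omega a.
  move=> i; have := hO i.+1; by rewrite coefD coefMX coefC /= addr0.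
have [z ->] : inO omega c.
  have := hO 0%N; by rewrite coefD coefMX coefC /= add0r.
exact: (Gall z _ (Hmul _ (IH haO))).
Qed.
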